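(* Let $f \in \mathbb{F}_q[x]$ be a squarefree polynomial of degree $n$. The recursion depth of Algorithm 3 (described below) on input $(f, 1, n)$ is $O(\log n)$.
   Context: For squarefree $g\in\mathbb{F}_q[x]$, $\sigma$ denotes the Frobenius automorphism of $\mathbb{F}_q[x]/g$, determined by $x\mapsto x^q$. Algorithm 2 is a procedure which, given a monic squarefree $g$ of degree $m$, an element $\tau$ of the cyclic group generated by the Frobenius of $\mathbb{F}_q[x]/g$ and a bound $\ell$, first tries to compute the order of $\tau$ by quantum order finding with $\ell$-bit precision; if this succeeds it returns $g$ and the order; otherwise it removes and outputs all irreducible factors of $g$ of degree $\le m^{2/3}$, and returns the remaining factor $\tilde g$ together with the order of the Frobenius of $\mathbb{F}_q[x]/\tilde g$ (computed by quantum order finding with precision $\lceil c_1 m^{1/3}\log m\rceil$). Algorithm 3, on input $(f,s,n)$ where $f$ is monic squarefree and $s>0$ divides the degrees of all irreducible factors of $f$: (1) compute $\tilde\sigma:=\sigma^s \bmod f$; if $\tilde\sigma=\mathrm{id}$, output $f$ and return. (2) Compute the order $d$ of $\tilde\sigma$ using Algorithm 2 with inputs $(f,\tilde\sigma,\log^2 n)$, and replace $f$ by the output polynomial $\tilde f$ (factors removed by Algorithm 2 are output). (3) Factor $d=p_1^{e_1}\cdots p_\ell^{e_\ell}$. (4) Compute $g:=\gcd(\tilde\sigma^{d/\prod_{i=1}^\ell p_i}(x)-x, f)$ and $g_0:=f/g$; set $T:=\{\}$; if $g\ne1$ add $(g,s,n)$ to $T$. (5) For $i=1,\dots,\ell$: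 compute $g_i:=\gcd(\tilde\sigma^{d/p_i}(x)-x, g_{i-1})$; if $g_i\ne1$, compute $h_i:=g_{i-1}/g_i$ and add $(h_i,sp_i^{e_i},n)$ to $T$; otherwise set $g_i:=g_{i-1}$ and $s:=sp_i^{e_i}$. (6) Add $(g_\ell,s,n)$ to $T$ and recursively process all tuples in $T$. Called on $(f,1,n)$, Algorithm 3 produces the distinct-degree factorization of $f$ (the products of all irreducible factors of each given degree). *)

(* Defs.v *)
From HB Require Import structures.
From mathcomp Require Import all_boot all_order all_algebra all_field.
Set Implicit Arguments. Unset Strict Implicit. Unset Printing Implicit Defensive.
Import GRing.Theory.

Section Alg3.
Variable F : finFieldType.

Definition q : nat := #|F|.

Definition squarefree (f : {poly F}) : Prop :=
  forall g : {poly F}, (g * g %| f)%R -> (size g <= 1)%N.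

(* x^{q^k} - x ; sigma^k = id on F_q[x]/g iff g divides it *)
Definition frobX (k : nat) : {poly F} := ('X ^+ (q ^ k) - 'X)%R.

Definition mgcd (a b : {poly F}) : {poly F} :=
  ((lead_coef (gcdp a b))^-1 *: gcdp a b)%R.

(* d is the order of tau = sigma^s in Aut(F_q[x]/g) *)
Definition is_order (g : {poly F}) (s d : nat) : Prop :=
  (0 < d)%N /\ (g %| frobX (s * d))%R /\
  forall d', (0 < d')%N -> (g %| frobX (s * d'))%R -> (d <= d')%N.

(* gt = the factor of g that remains after removing all irreducible
   factors of degree <= m^{2/3}, m = deg g *)
Definition small_removed (g gt : {poly F}) : Prop :=
  gt \is monic /\ (gt %| g)%R /\
  forall P : {poly F}, P \is monic -> irreducible_poly P -> (P %| g)%R ->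
    ((P %| gt)%R <-> ((size g).-1 ^ 2 < (size P).-1 ^ 3)%N).

(* possible outputs (ft, d) of Algorithm 2 on input (g, sigma^s, _):
   either order finding succeeds, or the fallback branch is taken *)
Definition alg2_out (g : {poly F}) (s : nat) (gt : {poly F}) (d : nat) : Prop :=
  (gt = g /\ is_order g s d) \/ (small_removed g gt /\ is_order gt s d).

(* one iteration of step (5) of Algorithm 3; s0 is the s of step (1),
   state = (g_{i-1}, current s, current T) *)
Definition alg3_loop_step (f : {poly F}) (s0 d : nat)
    (st : {poly F} * nat * seq ({poly F} * nat)) (p : nat)
    : {poly F} * nat * seq ({poly F} * nat) :=
  let: (gprev, s, T) := st in
  let gi := mgcd (frobX (s0 * (d %/ p)) %% f)%R gprev in
  if gi != 1%R then (gi, s, rcons T ((gprev %/ gi)%R, s * p ^ logn p d))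
  else (gprev, s * p ^ logn p d, T).

(* the list T of recursive calls made in steps (3)-(6), for the current
   polynomial f (output of Algorithm 2), the s of the call, and the order d *)
Definition alg3_children (f : {poly F}) (s0 d : nat) : seq ({poly F} * nat) :=
  let ps := primes d in
  let g := mgcd (frobX (s0 * (d %/ \prod_(p <- ps) p)) %% f)%R f in
  let g0 := (f %/ g)%R in
  let T0 := if g != 1%R then [:: (g, s0)] else [::] in
  let: (gl, sl, T) := foldl (alg3_loop_step f s0 d) (g0, s0, T0) ps in
  rcons T (gl, sl).

(* a call of Algorithm 3 on (f, s, n) may directly recursively call (f', s', n) *)
Definition alg3_call (f : {poly F}) (s : nat) (f' : {poly F}) (s' : nat) : Prop :=
  ~ (f %| frobX s)%R /\
  exists (ft : {poly F}) (d : nat),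
    alg2_out f s ft d /\ (f', s') \in alg3_children ft s d.

End Alg3.

(* Main.v *)
Require Import Defs.
From HB Require Import structures.
From mathcomp Require Import all_boot all_order all_algebra all_field.
From mathcomp Require Import zify.
From Stdlib Require Import Classical.
Set Implicit Arguments. Unset Strict Implicit. Unset Printing Implicit Defensive.
Import GRing.Theory.

Lemma frobX_pow (F : finFieldType) a N :
  (frobX F a %| ('X ^+ (q F ^ a)) ^+ N - 'X ^+ N)%R.
Proof. by rewrite /frobX subrXX dvdp_mulr. Qed.

Lemma frobX0 (F : finFieldType) : frobX F 0 = 0%R.
Proof. by rewrite /frobX expn0 expr1 subrr. Qed.

Lemma frob_add (F : finFieldType) (g : {poly F}) a b :
  (g %| frobX F a)%R -> (g %| frobX F b)%R -> (g %| frobX F (a + b))%R.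
Proof.
move=> ha hb.
have -> : frobX F (a + b) = ((('X ^+ (q F ^ a)) ^+ (q F ^ b) - 'X ^+ (q F ^ b)) + frobX F b)%R.
  by rewrite /frobX expnD exprM addrA subrK.
by rewrite dvdp_add // (dvdp_trans ha) // frobX_pow.
Qed.

Lemma frob_mul (F : finFieldType) (g : {poly F}) a t :
  (g %| frobX F a)%R -> (g %| frobX F (a * t))%R.
Proof.
move=> ha; elim: t => [|t IH]; first by rewrite muln0 frobX0 dvdp0.
by rewrite mulnS frob_add.
Qed.

Lemma frob_sub (F : finFieldType) (g : {poly F}) a b :
  (g %| frobX F a)%R -> (g %| frobX F b)%R -> (b <= a)%N -> (g %| frobX F (a - b))%R.
Proof.
move=> ha hb hle.
have -> : frobX F (a - b) = (frobX F a - (('X ^+ (q F ^ b)) ^+ (q F ^ (a - b)) - 'X ^+ (q F ^ (a - b))))%R.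
  rewrite /frobX -exprM -expnD subnKC //.
  by rewrite opprB [RHS]addrC addrA subrK.
by apply: dvdp_sub => //; rewrite (dvdp_trans hb) // frobX_pow.
Qed.

Lemma frob_mod (F : finFieldType) (g : {poly F}) a b :
  (g %| frobX F a)%R -> (g %| frobX F b)%R -> (g %| frobX F (a %% b)%N)%R.
Proof.
move=> ha hb.
have -> : (a %% b = a - b * (a %/ b))%N by rewrite {2}(divn_eq a b) mulnC addKn.
apply: frob_sub => //; first exact: frob_mul.
by rewrite {2}(divn_eq a b) mulnC leq_addr.
Qed.

Lemma order_dvd (F : finFieldType) (g : {poly F}) s d x :
  is_order g s d -> (g %| frobX F (s * x))%R -> (d %| x)%N.
Proof.
move=> [d0 [hd hmin]] hx.
have h := frob_mod hx hd; rewrite -muln_modr in h.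
apply/dvdnP; exists (x %/ d).
case: (posnP (x %% d)) => [e|p]; first by rewrite {1}(divn_eq x d) e addn0.
have := hmin _ p h; by rewrite leqNgt ltn_pmod.
Qed.

Lemma order_ex (F : finFieldType) (g : {poly F}) s x :
  (0 < x)%N -> (g %| frobX F (s * x))%R -> exists d, is_order g s d.
Proof.
move=> x0 hx.
have ex : exists d, (0 < d)%N && (g %| frobX F (s * d))%R by exists x; rewrite x0.
case: (ex_minnP ex) => d /andP [d0 hd] hmin.
exists d; split => //; split => // d' d'0 hd'; apply: hmin; by rewrite d'0 hd'.
Qed.

Lemma mgcd_c_neq0 (F : finFieldType) (a b : {poly F}) : b != 0%R ->
  ((lead_coef (gcdp a b))^-1 != 0)%R.
Proof.
move=> b0; rewrite invr_eq0 lead_coef_eq0 gcdp_eq0 negb_and b0 orbT //.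
Qed.

Lemma mgcd_dvdl (F : finFieldType) (a b : {poly F}) : b != 0%R -> (mgcd a b %| a)%R.
Proof. by move=> b0; rewrite /mgcd dvdpZl ?mgcd_c_neq0 // dvdp_gcdl. Qed.

Lemma mgcd_dvdr (F : finFieldType) (a b : {poly F}) : b != 0%R -> (mgcd a b %| b)%R.
Proof. by move=> b0; rewrite /mgcd dvdpZl ?mgcd_c_neq0 // dvdp_gcdr. Qed.

Lemma dvdp_mgcd (F : finFieldType) (a b P : {poly F}) : b != 0%R ->
  (P %| a)%R -> (P %| b)%R -> (P %| mgcd a b)%R.
Proof. by move=> b0 ha hb; rewrite /mgcd dvdpZr ?mgcd_c_neq0 // dvdp_gcd ha hb. Qed.

Lemma NT1 b d p : 0 < d -> b %| d -> prime p -> ~~ (b %| d %/ p) -> p ^ logn p d %| b.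
Proof.
move=> d0 bd pp nb.
have b0 : 0 < b by apply: dvdn_gt0 d0 bd.
case: (leqP (logn p d) (logn p b)) => hl.
  by apply: dvdn_trans (pfactor_dvdnn p b); rewrite dvdn_exp2l.
case: (pfactor_coprime pp b0) => mb cb eb.
case: (pfactor_coprime pp d0) => md cd ed.
exfalso; move: nb; apply/negP/negPn.
have ld0 : 0 < logn p d by apply: leq_ltn_trans hl.
have edp : d %/ p = md * p ^ (logn p d).-1.
  rewrite {1}ed; case: (logn p d) ld0 => // e _; rewrite expnS mulnCA mulKn //; exact: prime_gt0.
rewrite edp eb; apply: dvdn_mul; last by rewrite dvdn_exp2l // -ltnS prednK.
have : mb %| md * p ^ logn p d by rewrite -ed (dvdn_trans _ bd) // eb dvdn_mulr.
rewrite Gauss_dvdl //; rewrite coprime_sym coprimeXl //.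
Qed.

Lemma NT2 d d' H : 1 < d -> 0 < d' -> d' %| d ->
  (forall p, p \in primes d -> d' %| d %/ p) ->
  (forall p, logn p d <= H) -> 0 < H /\ forall p, logn p d' <= H.-1.
Proof.
move=> d1 d'0 dd hp hH.
have d0 : 0 < d by apply: ltnW.
have pr : pdiv d \in primes d by rewrite mem_primes pdiv_prime // d0 pdiv_dvd.
have H0 : 0 < H by apply: leq_trans (hH (pdiv d)); rewrite logn_gt0.
split => // p.
case pd : (p \in primes d).
  have := mem_primes p d; rewrite pd => /esym/and3P [pp _ pdd].
  have dp0 : 0 < d %/ p by rewrite divn_gt0 ?prime_gt0 // dvdn_leq.
  apply: leq_trans (dvdn_leq_log p dp0 (hp p pd)) _.
  rewrite logn_div // (logn_prime p pp) eqxx -subn1 leq_sub2r //.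
have : logn p d = 0 by apply/eqP; rewrite -leqn0 leqNgt logn_gt0 pd.
move=> e; have := dvdn_leq_log p d0 dd; rewrite e leqn0 => /eqP ->; done.
Qed.

Lemma prod_primes_dvd d : 0 < d -> \prod_(p <- primes d) p %| d.
Proof.
move=> d0.
have E : d = \prod_(p <- primes d) p ^ logn p d.
  by rewrite {1}(prod_prime_decomp d0) prime_decompE big_map.
rewrite [X in _ %| X]E.
have : forall p, p \in primes d -> 0 < logn p d by move=> p; rewrite logn_gt0.
elim: (primes d) => [|p s IH] h; first by rewrite !big_nil.
rewrite !big_cons; apply: dvdn_mul; last by apply: IH => r rs; apply: h; rewrite inE rs orbT.
by rewrite dvdn_exp // h // inE eqxx.
Qed.

Definition goodL (F : finFieldType) (ft : {poly F}) s0 d (pre : seq nat)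
  (f' : {poly F}) (s' : nat) : Prop :=
  (f' %| ft)%R /\
  ((s' = s0 /\ forall p, p \in pre -> (f' %| frobX F (s0 * (d %/ p)))%R) \/
   exists p t, [/\ p \in primes d, 0 < t, s' = s0 * (p ^ logn p d * t) &
     forall P : {poly F}, 1 < size P -> (P %| f')%R ->
        ~~ (P %| frobX F (s0 * (d %/ p)))%R]).

Definition invL (F : finFieldType) (ft : {poly F}) s0 d (pre : seq nat)
  (st : {poly F} * nat * seq ({poly F} * nat)) : Prop :=
  goodL ft s0 d pre st.1.1 st.1.2 /\
  forall x, x \in st.2 -> goodL ft s0 d (primes d) x.1 x.2.

Lemma sq_contra (F : finFieldType) (f0 ft g h P : {poly F}) :
  squarefree f0 -> (ft %| f0)%R -> (g %| ft)%R -> 1 < size P ->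
  (P %| h)%R -> (P %| g %/ h)%R -> (h %| g)%R -> False.
Proof.
move=> sq hf hg sP Ph Pgh hg'.
have : (P * P %| g)%R by rewrite -(divpK hg') dvdp_mul.
move=> PPg; have := sq P (dvdp_trans PPg (dvdp_trans hg hf)).
by rewrite leqNgt sP.
Qed.

Lemma loop_step (F : finFieldType) (f0 ft : {poly F}) s0 d p pre st :
  squarefree f0 -> (ft %| f0)%R -> ft != 0%R ->
  p \in primes d -> invL ft s0 d pre st ->
  invL ft s0 d (rcons pre p) (alg3_loop_step ft s0 d st p).
Proof.
move=> sq hf ft0 pd.
case: st => [[gp s] T] [[gpft hgp] hT] /=.
simpl in gpft, hgp, hT.
have gp0 : gp != 0%R by apply: contraNneq ft0 => e; move: gpft; rewrite e dvd0p.
set gi := mgcd _ gp.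
have gigp : (gi %| gp)%R by apply: mgcd_dvdr.
have gift : (gi %| ft)%R by apply: dvdp_trans gpft.
have gifr : (gi %| frobX F (s0 * (d %/ p)))%R.
  by rewrite (dvdp_mod _ gift) mgcd_dvdl.
have Pgi : forall P, (P %| gp)%R -> (P %| frobX F (s0 * (d %/ p)))%R -> (P %| gi)%R.
  move=> P Pgp Pfr; apply: dvdp_mgcd => //.
  by rewrite -dvdp_mod // (dvdp_trans Pgp).
have pp : prime p by move: pd; rewrite mem_primes => /and3P [].
have pe0 : 0 < p ^ logn p d by rewrite expn_gt0 prime_gt0.
case: ifP => hgi /=.
- split.
  + split => //; case: hgp => [[-> hA]|[p0 [t [p0d t0 es hB]]]].
    * left; split => // p'; rewrite mem_rcons inE => /orP [/eqP -> //|].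
      by move=> /hA; apply: dvdp_trans.
    * right; exists p0, t; split => // P sP Pgi'; apply: hB => //.
      exact: dvdp_trans gigp.
  + move=> x; rewrite mem_rcons inE => /orP [/eqP -> /=|]; last exact: hT.
    split; first exact: (dvdp_trans (divp_dvd gigp) gpft).
    right; case: hgp => [[-> hA]|[p0 [t [p0d t0 es hB]]]].
    * exists p, 1; split => //; first by rewrite muln1.
      move=> P sP Ph; apply/negP => Pfr.
      apply: (sq_contra sq hf gpft sP _ Ph gigp).
      by apply: Pgi => //; exact: (dvdp_trans Ph (divp_dvd gigp)).
    * exists p0, (t * p ^ logn p d); split => //; first by rewrite muln_gt0 t0.
        by rewrite es -!mulnA.
      move=> P sP Ph; apply: hB => //; exact: (dvdp_trans Ph (divp_dvd gigp)).
- split => //; split => //; right.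
  case: hgp => [[-> hA]|[p0 [t [p0d t0 es hB]]]].
  * exists p, 1; split => //; first by rewrite muln1.
    move=> P sP Pgp; apply/negP => Pfr.
    have := Pgi _ Pgp Pfr; move/negbFE: hgi => /eqP ->.
    by rewrite dvdp1 => /eqP e; move: sP; rewrite e.
  * exists p0, (t * p ^ logn p d); split => //; first by rewrite muln_gt0 t0.
    by rewrite es -!mulnA.
Qed.

Lemma loop_fold (F : finFieldType) (f0 ft : {poly F}) s0 d ps pre st :
  squarefree f0 -> (ft %| f0)%R -> ft != 0%R ->
  (forall p, p \in ps -> p \in primes d) -> invL ft s0 d pre st ->
  invL ft s0 d (pre ++ ps) (foldl (alg3_loop_step ft s0 d) st ps).
Proof.
move=> sq hf ft0; elim: ps pre st => [|p ps IH] pre st hps hI /=.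
  by rewrite cats0.
rewrite -cat_rcons; apply: IH.
  by move=> r rs; apply: hps; rewrite inE rs orbT.
apply: loop_step sq hf ft0 _ hI; apply: hps; exact: mem_head.
Qed.

Lemma children_good (F : finFieldType) (f0 ft : {poly F}) s0 d f' s' :
  squarefree f0 -> (ft %| f0)%R -> ft != 0%R -> is_order ft s0 d ->
  (f', s') \in alg3_children ft s0 d -> goodL ft s0 d (primes d) f' s'.
Proof.
move=> sq hf ft0 [d0 [hd _]].
rewrite /alg3_children.
set R := \prod_(p <- primes d) p.
set g := mgcd _ ft.
have gft : (g %| ft)%R by apply: mgcd_dvdr.
have gfr : (g %| frobX F (s0 * (d %/ R)))%R by rewrite (dvdp_mod _ gft) mgcd_dvdl.
have Rd : R %| d by apply: prod_primes_dvd.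
have gA : forall p, p \in primes d -> (g %| frobX F (s0 * (d %/ p)))%R.
  move=> p pd.
  have pR : p %| R by rewrite /R (big_rem _ pd) /= dvdn_mulr.
  have -> : d %/ p = d %/ R * (R %/ p) by rewrite muln_divA // divnK.
  by rewrite mulnA; apply: frob_mul.
have I0 : invL ft s0 d [::] (ft %/ g, s0, if g != 1%R then [:: (g, s0)] else [::])%R.
  split.
    by split; [apply: divp_dvd | left].
  move=> x /=; case: ifP => _; last by rewrite in_nil.
  by rewrite inE => /eqP -> /=; split => //; left.
have := loop_fold sq hf ft0 (fun p (h : p \in primes d) => h) I0.
case: (foldl _ _ _) => [[gl sl] T] [hl hT].
rewrite mem_rcons inE => /orP [/eqP [-> ->] //|].
by move/hT.
Qed.

Lemma transition (F : finFieldType) (f0 ft f' ft' P : {poly F}) s d s' d' b H :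
  squarefree f0 -> (ft %| f0)%R -> ft != 0%R -> is_order ft s d ->
  (f', s') \in alg3_children ft s d -> ~~ (f' %| frobX F s')%R ->
  (ft' %| f')%R -> is_order ft' s' d' ->
  1 < size P -> (P %| f')%R -> is_order P s b -> (forall p, logn p d <= H) ->
  exists b' H', [/\ is_order P s' b', (forall p, logn p d' <= H') &
     H' + trunc_log 2 b' < H + trunc_log 2 b].
Proof.
move=> sq hf ft0 hod hc nf ftf hod' sP Pf hob hH.
have [f'ft hAB] := children_good sq hf ft0 hod hc.
have [d0 [hd _]] := hod.
have [d'0 _] := hod'.
have [b0 [hb _]] := hob.
have ft'ft : (ft' %| ft)%R by apply: dvdp_trans f'ft.
case: hAB => [[es hA]|[p [t [pd t0 es hB]]]].
- subst s'.
  have d1 : 1 < d.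
    rewrite ltn_neqAle d0 andbT; apply/negP => /eqP e.
    by move: nf; rewrite (dvdp_trans f'ft) // -[s]muln1 e.
  have dd : d' %| d by apply: (order_dvd hod'); apply: dvdp_trans hd.
  have hp : forall p, p \in primes d -> d' %| d %/ p.
    move=> p pd; apply: (order_dvd hod'); apply: dvdp_trans ftf (hA p pd).
  have [H0 hH'] := NT2 d1 d'0 dd hp hH.
  exists b, H.-1; split => //.
  by rewrite ltn_add2r prednK // ltnSn ?H0.
- have pp : prime p by move: pd; rewrite mem_primes => /and3P [].
  have Pft : (P %| ft)%R by apply: dvdp_trans f'ft.
  have bd : b %| d by apply: (order_dvd hob); apply: dvdp_trans hd.
  have nbd : ~~ (b %| d %/ p).
    apply/negP => /dvdnP [k ek]; move: (hB P sP Pf); apply/negP/negPn.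
    by rewrite ek (mulnC k) mulnA; apply: frob_mul.
  have pb := NT1 d0 bd pp nbd.
  set e := p ^ logn p d in es pb.
  have l0 : 0 < logn p d by rewrite logn_gt0.
  have e0 : 1 < e.
    apply: leq_trans (prime_gt1 pp) _; rewrite /e -{1}(expn1 p).
    by apply: leq_pexp2l => //; apply: prime_gt0.
  pose c := b %/ e.
  have c0 : 0 < c.
    rewrite /c divn_gt0; last by apply: ltnW.
    by apply: dvdn_leq.
  have Pc : (P %| frobX F (s' * c))%R.
    have -> : s' * c = s * b * t.
      rewrite es /c -{2}(divnK pb).
      move: (b %/ e) => x; by rewrite (mulnC x e) -!mulnA (mulnC t x).
    exact: frob_mul.
  have [b' hob'] := order_ex c0 Pc.
  have b'c : b' %| c by apply: (order_dvd hob').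
  have b'0 : 0 < b' by case: hob'.
  have dd : d' %| d.
    apply: (order_dvd hod'); rewrite es mulnAC; apply: frob_mul.
    exact: dvdp_trans ft'ft hd.
  exists b', H; split => //.
    by move=> r; apply: leq_trans (hH r); apply: dvdn_leq_log.
  rewrite ltn_add2l.
  have : b'.*2 <= b.
    rewrite -(divnK pb) -/c -muln2; apply: leq_mul; first by apply: dvdn_leq.
    exact: e0.
  move=> /(leq_trunc_log 2); rewrite trunc_log2_double //.
Qed.

Lemma F1m (F : finFieldType) (P : {poly F}) (hI : monic_irreducible_poly P) :
  (P %| 'X ^+ (#|F| ^ (size P).-1) - 'X)%R.
Proof.
pose L := {poly %/ P with hI}.
pose x : L := in_qpoly P 'X.
have hx : (x ^+ #|L| = x)%R by apply: expf_card.
rewrite card_qfpoly in hx.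
have e : in_qpoly P ('X ^+ (#|F| ^ (size P).-1) - 'X)%R = 0%R :> {poly %/ P}.
  by rewrite rmorphB rmorphXn /= -/x; apply/eqP; rewrite subr_eq0; apply/eqP; exact: hx.
have : (Pdiv.Ring.rmodp ('X ^+ (#|F| ^ (size P).-1) - 'X) (mk_monic P))%R = 0%R.
  by have := congr1 val e.
rewrite (mk_monicE hI) => h0.
rewrite dvdpE /Pdiv.Ring.rdvdp h0 //.
Qed.

Lemma F1 (F : finFieldType) (P : {poly F}) :
  irreducible_poly P -> (P %| frobX F (size P).-1)%R.
Proof.
move=> hI.
have P0 : P != 0%R by apply: irredp_neq0.
set c := ((lead_coef P)^-1)%R.
have c0 : c != 0%R by rewrite invr_eq0 lead_coef_eq0.
have sc : size (c *: P)%R = size P by rewrite size_scale.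
have hm : monic_irreducible_poly (c *: P)%R.
  split.
    split; first by rewrite sc; case: hI.
    move=> r r1 rd.
    have h : (r %= P)%R by apply: (apply_irredp hI r1); rewrite -(dvdpZr _ _ c0).
    by apply: (eqp_trans h); rewrite eqp_sym; exact: eqp_scale.
  by rewrite monicE lead_coefZ mulVf // lead_coef_eq0.
have := F1m hm; rewrite sc /frobX /q.
by rewrite dvdpZl.
Qed.

Lemma irr_factor (F : finFieldType) n (p : {poly F}) :
  size p <= n -> 1 < size p -> exists P, irreducible_poly P /\ (P %| p)%R.
Proof.
elim: n p => [|n IH] p sp p1; first by move: (leq_trans p1 sp).
case: (classic (irreducible_poly p)) => hp; first by exists p; split.
have [q nq] : exists q : {poly F}, ~ (size q != 1 -> (q %| p)%R -> (q %= p)%R).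
  by apply: not_all_ex_not => H; apply: hp; split.
have q1 : size q != 1.
  by case E: (size q != 1) => //; exfalso; apply: nq; rewrite E.
have qp : (q %| p)%R.
  by case E: (q %| p)%R => //; exfalso; apply: nq => _; rewrite E.
have nqp : ~ (q %= p)%R by move=> h; apply: nq => _ _; exact: h.
have p0 : p != 0%R by rewrite -size_poly_gt0 ltnW.
have q0 : q != 0%R by apply: contraNneq p0 => e; move: qp; rewrite e dvd0p.
have sq : size q < size p.
  rewrite ltn_neqAle dvdp_leq // andbT dvdp_size_eqp //; apply/negP => h; exact: nqp.
have q1' : 1 < size q.
  by move: q1; rewrite -size_poly_gt0 in q0; case: (size q) q0 => [|[|]].
have sqn : size q <= n by rewrite -ltnS (leq_trans sq sp).
have [P [hP Pq]] := IH q sqn q1'.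
exists P; split => //; exact: dvdp_trans qp.
Qed.

Lemma const_dvd (F : finFieldType) (f G : {poly F}) : f != 0%R -> size f <= 1 -> (f %| G)%R.
Proof.
move=> f0 sf; apply: (dvdp_trans _ (dvd1p G)); rewrite dvdp1.
by move: f0; rewrite -size_poly_gt0; case: (size f) sf => [|[|]].
Qed.

Lemma F3 (F : finFieldType) n (f G : {poly F}) :
  size f <= n -> f != 0%R -> squarefree f ->
  (forall P, irreducible_poly P -> (P %| f)%R -> (P %| G)%R) -> (f %| G)%R.
Proof.
elim: n f => [|n IH] f sf f0 sq hP.
  by apply: const_dvd => //; apply: leq_trans sf _.
case: (leqP (size f) 1) => s1; first exact: const_dvd.
have [P [iP Pf]] := irr_factor (leqnn _) s1.
have P0 : P != 0%R by apply: irredp_neq0.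
have sP : 1 < size P by case: iP.
set g := (f %/ P)%R.
have fg : f = (g * P)%R by rewrite divpK.
have g0 : g != 0%R by apply: contraNneq f0 => e; rewrite fg e mul0r.
have sg : size g <= n.
  move: sf; rewrite fg size_mul // => h.
  move: h sP; move: (size g) (size P) => a b; lia.
have gf : (g %| f)%R by rewrite fg dvdp_mulr.
have sqg : squarefree g by move=> h hh; apply: sq; apply: dvdp_trans hh gf.
have gG : (g %| G)%R.
  by apply: IH => // Q iQ Qg; apply: hP => //; apply: dvdp_trans Qg gf.
have cop : coprimep g P.
  rewrite coprimep_sym irreducible_poly_coprime //; apply/negP => Pg.
  have : (P * P %| f)%R by rewrite fg dvdp_mul.
  by move/sq; rewrite leqNgt sP.
by rewrite fg Gauss_dvdp // gG hP.
Qed.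

Lemma initH (F : finFieldType) n (f ft : {poly F}) d :
  size f = n.+1 -> squarefree f -> (ft %| f)%R -> ft != 0%R -> is_order ft 1 d ->
  forall p, logn p d <= trunc_log 2 n.
Proof.
move=> sf sq ftf ft0 hod p.
have [d0 [hd hmin]] := hod.
case: (posnP (logn p d)) => [-> //|lp].
have := lp; rewrite logn_gt0 mem_primes => /and3P [pp _ pd].
set e := logn p d in lp *.
apply: trunc_log_max => //.
have pen : p ^ e <= n.
  rewrite leqNgt; apply/negP => np.
  have dp0 : 0 < d %/ p by rewrite divn_gt0 ?prime_gt0 // dvdn_leq.
  have : (ft %| frobX F (1 * (d %/ p)))%R.
    apply: (F3 (leqnn _)) => // [h hh|Q iQ Qft].
      by apply: sq; apply: dvdp_trans hh ftf.
    have sQ : 1 < size Q by case: iQ.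
    have Q0 : Q != 0%R by apply: irredp_neq0.
    have hQ := F1 iQ.
    have dQ0 : 0 < (size Q).-1 by rewrite -ltnS prednK // ltnW.
    have [c hoc] : exists c, is_order Q 1 c by apply: (order_ex (x := (size Q).-1)) => //; rewrite mul1n.
    have cQ : c %| (size Q).-1 by apply: (order_dvd hoc); rewrite mul1n.
    have cd : c %| d by apply: (order_dvd hoc); apply: dvdp_trans hd.
    have cn : c <= n.
      apply: leq_trans (dvdn_leq dQ0 cQ) _.
      have : size Q <= size f by apply: dvdp_leq; [rewrite -size_poly_gt0 sf | apply: dvdp_trans ftf].
      by rewrite sf => h; rewrite -ltnS prednK // ltnW.
    case: (boolP (c %| d %/ p)) => [/dvdnP [k ->]|ncd].
      have [_ [hc _]] := hoc.
      by move: hc; rewrite !mul1n mulnC => hc; apply: frob_mul.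
    have c0 : 0 < c by case: hoc.
    have := NT1 d0 cd pp ncd; rewrite -/e => /(dvdn_leq c0).
    move=> h; exfalso; move: np; rewrite ltnNge (leq_trans h cn) //.
  move=> h; have := hmin _ dp0 h; rewrite leqNgt ltn_Pdiv ?prime_gt1 //.
apply: leq_trans pen; rewrite leq_exp2r ?prime_gt1 //.
Qed.

Lemma call_facts (F : finFieldType) (f0 f f' : {poly F}) s s' :
  squarefree f0 -> f0 != 0%R -> (f %| f0)%R -> alg3_call f s f' s' ->
  exists ft d, [/\ (ft %| f)%R, ft != 0%R, is_order ft s d,
    (f', s') \in alg3_children ft s d & (f' %| ft)%R] /\ ~~ (f %| frobX F s)%R.
Proof.
move=> sq f00 ff0 [nf [ft [d [ha hc]]]].
have [ftf hod] : (ft %| f)%R /\ is_order ft s d.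
  case: ha => [[-> h]|[[_ [h _]] h']]; split => //; exact: dvdpp.
have ftf0 : (ft %| f0)%R by apply: dvdp_trans ff0.
have ft0 : ft != 0%R by apply: contraNneq f00 => e; move: ftf0; rewrite e dvd0p eq_sym.
have [f'ft _] := children_good sq ftf0 ft0 hod hc.
exists ft, d; split => //; exact/negP.
Qed.

Theorem lemma2 : exists C : nat,
  forall (F : finFieldType) (n : nat) (f : {poly F}),
    f \is monic -> squarefree f -> size f = n.+1 ->
    forall (k : nat) (calls : nat -> {poly F} * nat),
      calls 0 = (f, 1) ->
      (forall i, i < k ->
         alg3_call (calls i).1 (calls i).2 (calls i.+1).1 (calls i.+1).2) ->
      k <= C * (trunc_log 2 n).+1.
Proof.
exists 2 => F n f fm sq sf k calls c0 hc.
have f0 : f != 0%R by apply: monic_neq0.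
have fi : forall i, i <= k -> ((calls i).1 %| f)%R.
  elim => [_|i IH ik]; first by rewrite c0 dvdpp.
  have [ft [d [[ftf _ _ _ f'ft] _]]] := call_facts sq f0 (IH (ltnW ik)) (hc i ik).
  by apply: dvdp_trans (dvdp_trans ftf (IH (ltnW ik))).
have stp : forall i, i < k -> ((calls i.+1).1 %| (calls i).1)%R.
  move=> i ik.
  have [ft [d [[ftf _ _ _ f'ft] _]]] := call_facts sq f0 (fi i (ltnW ik)) (hc i ik).
  exact: dvdp_trans ftf.
have dec : forall i j, i <= j -> j <= k -> ((calls j).1 %| (calls i).1)%R.
  move=> i; elim => [|j IH] ij jk.
    by move: ij; rewrite leqn0 => /eqP ->; apply: dvdpp.
  case: (ltngtP i j.+1) ij => // [ij _|-> _]; last exact: dvdpp.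
  by apply: dvdp_trans (stp j jk) (IH ij (ltnW jk)).
case: k hc fi stp dec => [|[|K]] hc fi stp dec.
- by [].
- by rewrite mulSn.
set fl := (calls K.+1).1.
have [ftl [dl [[_ _ _ _ _] nfl]]] := call_facts sq f0 (fi K.+1 (leqnSn _)) (hc K.+1 (leqnn _)).
have fl0 : fl != 0%R.
  by apply: contraNneq f0 => e; move: (fi K.+1 (leqnSn _)); rewrite -/fl e dvd0p eq_sym.
have sfl : 1 < size fl.
  rewrite ltnNge; apply/negP => h; move/negP: nfl; apply; exact: const_dvd.
have [P [iP Pfl]] := irr_factor (leqnn _) sfl.
have sP : 1 < size P by case: iP.
have PD : forall j, j <= K.+1 -> (P %| (calls j).1)%R.
  by move=> j jK; apply: dvdp_trans Pfl (dec j K.+1 jK (leqnSn _)).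
have S : forall j, j <= K -> exists ft d b H,
   [/\ (ft %| (calls j).1)%R, ft != 0%R, is_order ft (calls j).2 d &
       ((calls j.+1).1, (calls j.+1).2) \in alg3_children ft (calls j).2 d] /\
   [/\ is_order P (calls j).2 b, (forall p, logn p d <= H) &
       H + trunc_log 2 b + j <= trunc_log 2 n + trunc_log 2 n].
  elim => [_|j IH jK].
    have [ft [d [[ftf ft0 hod hch f'ft] _]]] := call_facts sq f0 (fi 0 isT) (hc 0 isT).
    move: ftf hod hch; rewrite c0 /= => ftf hod hch.
    have [d0 [hd _]] := hod.
    have Pft : (P %| ft)%R.
      apply: dvdp_trans f'ft; apply: PD; by [].
    have [b hob] := order_ex d0 (dvdp_trans Pft hd).
    exists ft, d, b, (trunc_log 2 n); split; first by split.
    split => //; first exact: (initH sf sq ftf ft0 hod).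
    rewrite addn0 leq_add2l; apply: leq_trunc_log.
    have [b0 _] := hob.
    have sPn : size P <= n.+1 by rewrite -sf; apply: dvdp_leq => //; apply: dvdp_trans ftf.
    have bP : b %| (size P).-1 by apply: (order_dvd hob); rewrite mul1n; apply: F1.
    apply: leq_trans (dvdn_leq _ bP) _; first by rewrite -ltnS prednK // ltnW.
    by rewrite -ltnS prednK // ltnW.
  have [ft [d [b [H [[ftf ft0 hod hch] [hob hH hpot]]]]]] := IH (ltnW jK).
  have jk : j.+1 < K.+2 by rewrite ltnS ltnW.
  have [ft' [d' [[ft'f ft'0 hod' hch' f'ft'] nf]]] := call_facts sq f0 (fi j.+1 (ltnW jk)) (hc j.+1 jk).
  have ftf0 : (ft %| f)%R by apply: dvdp_trans ftf (fi j (leq_trans (ltnW jK) (leqW (leqnSn K)))).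
  have [b' [H' [hob' hH' hlt]]] :=
    transition sq ftf0 ft0 hod hch nf ft'f hod' sP (PD j.+1 (leqW jK)) hob hH.
  exists ft', d', b', H'; split; first by split.
  split => //; move: hlt hpot; move: (trunc_log 2 b') (trunc_log 2 b) (trunc_log 2 n) => x y z; clear; lia.
have [ft [d [b [H [_ [_ _ hpot]]]]]] := S K (leqnn _).
move: hpot; move: (trunc_log 2 b) (trunc_log 2 n) => x y; clear; lia.
Qed.
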